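(* For every $m\geq1$ and every $i\in\{1,\dots,N\}$, $$C^{(2m+1)}_{ii}\cdot v=\lambda_i\, C^{(2m)}_{ii}\cdot v-G_i\,C^{(2m)}_{-i,i}\cdot v.$$
   Context: Let $N\geq1$, $I=\{-N,\dots,-1,1,\dots,N\}$, and for $k\in I$ put $\bar k=0$ if $k>0$, $\bar k=1$ if $k<0$. The Lie superalgebra $\mathfrak{q}(N)$ over $\mathbb{C}$ is spanned by elements $F_{ij}$ ($i,j\in I$) with $F_{-i,-j}=F_{ij}$ (realized as $F_{ij}=E_{ij}+E_{-i,-j}\in\mathfrak{gl}(N|N)$), $F_{ij}$ of parity $\bar\imath+\bar\jmath\bmod 2$, and supercommutator $$[F_{ij}, F_{kl}] = \delta_{kj} F_{il} - (-1)^{(\bar{\imath}+ \bar{\jmath})(\bar{k} + \bar{l})} \delta_{il} F_{kj} + \delta_{k,-j} F_{-i,l} - (-1)^{(\bar{\imath} + \bar{\jmath})(\bar{k} + \bar{l})} \delta_{-i,l} F_{k,-j}.$$ For $n\geq1$ define $C^{(n)}_{ij}\in U(\mathfrak{q}(N))$ by $$C^{(n)}_{ij} = \sum_{k_1,\ldots,k_{n-1}\in I}F_{ik_1} (-1)^{\bar{k}_1} F_{k_1k_2} (-1)^{\bar{k}_2} \cdots F_{k_{n-2}k_{n-1}} (-1)^{\bar{k}_{n-1}} F_{k_{n-1}j}$$ (so $C^{(1)}_{ij}=F_{ij}$). For $i>0$ let $G_i=F_{-i,i}$ $(=F_{i,-i})$. Let $V$ be a representation of $\mathfrak{q}(N)$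 and $v\in V$ a vector such that $F_{ij}\cdot v=0$ whenever $|i|<|j|$, and $F_{ii}\cdot v=\lambda_i v$ for $i=1,\dots,N$, where $\lambda_1,\dots,\lambda_N\in\mathbb{C}$. *)

(* Defs.v *)
From HB Require Import structures.
From mathcomp Require Import all_boot all_order all_algebra.
Set Implicit Arguments. Unset Strict Implicit. Unset Printing Implicit Defensive.
Import Order.TTheory GRing.Theory Num.Theory.
Local Open Scope ring_scope.

(* Index set I = {-N,...,-1,1,...,N}.  The pair (a, b) with a : 'I_N encodes
   the index  (a+1)  if b = false  and  -(a+1)  if b = true.
   Hence |k| = a+1 and bar k = b. *)
Definition qidx (N : nat) : finType := ('I_N * bool)%type.

Definition qabs {N} (k : qidx N) : nat := (k.1).+1.
Definition qpar {N} (k : qidx N) : bool := k.2.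
Definition qneg {N} (k : qidx N) : qidx N := (k.1, ~~ k.2).
Definition qpos {N} (a : 'I_N) : qidx N := (a, false).

Definition qsgn {K : pzRingType} (b : bool) : K := (-1) ^+ b.

(* rho : I -> I -> End(V) is a representation of q(N), where rho i j is the
   action of F_{ij}: the identification F_{-i,-j} = F_{ij} and the
   supercommutator relations of q(N) hold. *)
Definition is_qrep (K : pzRingType) (N : nat) (V : lmodType K)
    (rho : qidx N -> qidx N -> {linear V -> V}) : Prop :=
  (forall i j, rho (qneg i) (qneg j) =1 rho i j) /\
  (forall i j k l (w : V),
     let s : K := qsgn ((qpar i (+) qpar j) && (qpar k (+) qpar l)) in
     rho i j (rho k l w) - s *: rho k l (rho i j w) =
       (k == j)%:R *: rho i l w
       - s *: ((i == l)%:R *: rho k j w)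
       + (k == qneg j)%:R *: rho (qneg i) l w
       - s *: ((qneg i == l)%:R *: rho k (qneg j) w)).

(* Caux n i j w = C^{(n+1)}_{ij} . w, using
   C^{(n+1)}_{ij} = sum_k F_{ik} (-1)^{bar k} C^{(n)}_{kj}. *)
Fixpoint Caux (K : pzRingType) (N : nat) (V : lmodType K)
    (rho : qidx N -> qidx N -> {linear V -> V}) (n : nat)
    (i j : qidx N) (w : V) : V :=
  match n with
  | 0 => rho i j w
  | n'.+1 => \sum_(k : qidx N) qsgn (qpar k) *: rho i k (Caux rho n' k j w)
  end.

(* Cact rho n i j w = C^{(n)}_{ij} . w  (for n >= 1). *)
Definition Cact (K : pzRingType) (N : nat) (V : lmodType K)
    (rho : qidx N -> qidx N -> {linear V -> V}) (n : nat)
    (i j : qidx N) (w : V) : V := Caux rho n.-1 i j w.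

(* Main.v *)
Require Import Defs.
From HB Require Import structures.
From mathcomp Require Import all_boot all_order all_algebra.
From mathcomp Require Import ring.
Import Order.TTheory GRing.Theory Num.Theory.
Local Open Scope ring_scope.

Section Helpers.
Variables (K : numClosedFieldType) (N : nat) (V : lmodType K)
  (rho : qidx N -> qidx N -> {linear V -> V}).

Lemma qsgnE (b : bool) : qsgn b = (if b then -1 else 1 : K).
Proof. by case: b; rewrite /qsgn ?expr1 ?expr0. Qed.

Lemma qnegK (x : qidx N) : qneg (qneg x) = x.
Proof. by case: x => a b; rewrite /qneg /= negbK. Qed.

Lemma qneg_inj : injective (@qneg N).
Proof. exact: (can_inj qnegK). Qed.

Lemma qneg_neq (x : qidx N) : (x == qneg x) = false.
Proof. by case: x => a [] ; rewrite /qneg /= xpair_eqE /= andbF. Qed.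

Lemma sum_delta (q : qidx N) (f : qidx N -> V) :
  \sum_(p : qidx N) (p == q)%:R *: f p = f q.
Proof.
rewrite (bigD1 q) //= eqxx scale1r big1 ?addr0 // => p /negbTE ->.
by rewrite scale0r.
Qed.

Lemma sum_delta' (q : qidx N) (f : qidx N -> V) :
  \sum_(p : qidx N) (q == p)%:R *: f p = f q.
Proof. by rewrite -[RHS](sum_delta q); apply: eq_bigr => p _; rewrite eq_sym. Qed.

Lemma sum_pair0 (f : qidx N -> V) :
  (forall a, f (a, false) + f (a, true) = 0) -> \sum_(p : qidx N) f p = 0.
Proof.
move=> H.
have -> : \sum_(p : qidx N) f p = \sum_(p : 'I_N * bool) f (p.1, p.2).
  by apply: eq_bigr => -[].
rewrite -(pair_big xpredT xpredT (fun a b => f (a, b))) /=.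
rewrite big1 // => a _; rewrite big_bool /=. rewrite addrC; exact: H.
Qed.

Lemma Caux_scale n (i j : qidx N) (c : K) (w : V) :
  Caux rho n i j (c *: w) = c *: Caux rho n i j w.
Proof.
elim: n i j => [|n IH] i j /=; first by rewrite linearZ.
rewrite scaler_sumr; apply: eq_bigr => p _.
by rewrite IH linearZ scalerA mulrC -scalerA.
Qed.


Lemma rhoZ a b c (w : V) : rho a b (c *: w) = c *: rho a b w.
Proof. exact: linearZZ. Qed.
Lemma rhoB a b (w u : V) : rho a b (w - u) = rho a b w - rho a b u.
Proof. exact: raddfB. Qed.
Lemma rhoD a b (w u : V) : rho a b (w + u) = rho a b w + rho a b u.
Proof. exact: raddfD. Qed.

Lemma rho0 a b : rho a b 0 = 0.
Proof. exact: raddf0. Qed.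
Lemma rhoN a b (w : V) : rho a b (- w) = - rho a b w.
Proof. exact: raddfN. Qed.

Lemma comb (a b c d f h : V) : a + - b + c + - d + (b + - f + d + - h) = a - f + c - h.
Proof.
rewrite -!addrA; congr (_ + _).
rewrite [- d + _]addrCA [c + (b + _)]addrCA addKr.
by rewrite [- d + _]addrCA addKr addrCA.
Qed.

Lemma sum_deltaG (q : qidx N) (F : qidx N -> V) :
  (forall p, p != q -> F p = 0) -> \sum_(p : qidx N) F p = F q.
Proof. by move=> H; rewrite (bigD1 q) //= big1 ?addr0 // => p /H. Qed.

Lemma sum_dl (q : qidx N) (c : qidx N -> K) (f : qidx N -> V) :
  \sum_(p : qidx N) (c p * (p == q)%:R) *: f p = c q *: f q.
Proof.
rewrite (sum_deltaG q) ?eqxx ?mulr1 // => p hp.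
by rewrite (negbTE hp) mulr0 scale0r.
Qed.
Lemma sum_dr (q : qidx N) (c : qidx N -> K) (f : qidx N -> V) :
  \sum_(p : qidx N) (c p * (q == p)%:R) *: f p = c q *: f q.
Proof.
rewrite -(sum_dl q); apply: eq_bigr => p _; by rewrite eq_sym.
Qed.

Definition ss (i j k l : qidx N) : K := qsgn ((qpar i (+) qpar j) && (qpar k (+) qpar l)).

Lemma ssM (i j k p l : qidx N) : ss i j k p * ss i j p l = ss i j k l.
Proof. rewrite /ss !qsgnE; by case: (qpar i) (qpar j) (qpar k) (qpar p) (qpar l) => [] [] [] [] [] /=; rewrite ?mulr1 ?mulrNN ?mulr1 ?mulN1r ?mulrN1 ?opprK. Qed.

Lemma comm (Hrep : is_qrep rho) n (i j k l : qidx N) (w : V) :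
  rho i j (Caux rho n k l w) - ss i j k l *: Caux rho n k l (rho i j w) =
  (k == j)%:R *: Caux rho n i l w - ss i j k l *: ((i == l)%:R *: Caux rho n k j w)
  + (k == qneg j)%:R *: Caux rho n (qneg i) l w
  - ss i j k l *: ((qneg i == l)%:R *: Caux rho n k (qneg j) w).
Proof.
elim: n k l w => [|n IH] k l w; first exact: (Hrep.2 i j k l w).
rewrite /= raddf_sum scaler_sumr -sumrB.
have E : forall p, rho i j (qsgn (qpar p) *: rho k p (Caux rho n p l w)) - ss i j k l *: (qsgn (qpar p) *: rho k p (Caux rho n p l (rho i j w)))
  = qsgn (qpar p) *: (rho i j (rho k p (Caux rho n p l w)) - ss i j k p *: rho k p (rho i j (Caux rho n p l w)))
    + (qsgn (qpar p) * ss i j k p) *: rho k p (rho i j (Caux rho n p l w) - ss i j p l *: Caux rho n p l (rho i j w)).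
  move=> p; rewrite rhoZ rhoB rhoZ !scalerBr !scalerA -(ssM i j k p l).
  rewrite addrA subrK; congr (_ - _ *: _); ring.
rewrite (eq_bigr _ (fun p _ => E p)).
under eq_bigr => p _ do rewrite (Hrep.2 i j k p) -/(ss i j k p) IH.
under eq_bigr => p _ do rewrite !rhoD !rhoN !rhoZ !scalerDr !scalerN !scalerA.
rewrite !(big_split, sumrB) /= !sumrN.
rewrite !sum_dl !sum_dr.
have S1 : qsgn (qpar i) * ss i j k i = qsgn (qpar j) * ss i j k j.
  rewrite /ss !qsgnE; by case: (qpar i) (qpar j) (qpar k) => [] [] [] /=; rewrite ?mulr1 ?mulrNN ?mulr1 ?mulN1r ?mulrN1 ?opprK.
have S2 : qsgn (qpar (qneg i)) * ss i j k (qneg i) = qsgn (qpar (qneg j)) * ss i j k (qneg j).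
  rewrite /ss /qpar /= !qsgnE; by case: (i.2) (j.2) (k.2) => [] [] [] /=; rewrite ?mulr1 ?mulrNN ?mulr1 ?mulN1r ?mulrN1 ?opprK.
rewrite S1 S2 comb.
rewrite !scaler_sumr.
congr (_ - _ + _ - _); apply: eq_bigr => p _; rewrite !scalerA; congr (_ *: _).
- by rewrite mulrC.
- by rewrite -(ssM i j k p l); ring.
- by rewrite mulrC.
- by rewrite -(ssM i j k p l); ring.
Qed.

Lemma qsgn_neg b : qsgn (~~ b) = - qsgn b :> K.
Proof. by rewrite !qsgnE; case: b; rewrite ?opprK. Qed.

Lemma Caux_neg (Hrep : is_qrep rho) n (x y : qidx N) (w : V) :
  Caux rho n (qneg x) (qneg y) w = qsgn (odd n) *: Caux rho n x y w.
Proof.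
elim: n x y w => [|n IH] x y w /=; first by rewrite (Hrep.1 x y w) qsgnE scale1r.
rewrite (reindex_inj qneg_inj) /= scaler_sumr; apply: eq_bigr => p _.
rewrite IH (Hrep.1 x p) rhoZ scalerA scalerA.
by rewrite /qpar /= qsgn_neg qsgn_neg !mulNr mulrC.
Qed.

Lemma Caux0 n (x y : qidx N) : Caux rho n x y 0 = 0.
Proof. by move: (Caux_scale n x y 0 0); rewrite !scale0r. Qed.

Lemma neq_abs (x y : qidx N) : qabs x != qabs y -> (x == y) = false.
Proof. by apply: contraNF => /eqP ->. Qed.

Lemma qabs_neg (x : qidx N) : qabs (qneg x) = qabs x.
Proof. by []. Qed.


Lemma comm_low (Hrep : is_qrep rho) (v : V)
  (Hhw : forall x y : qidx N, (qabs x < qabs y)%N -> rho x y v = 0) n (k p i : qidx N) :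
  (qabs k < qabs p)%N -> (qabs k != qabs i) ->
  rho k p (Caux rho n p i v) = Caux rho n k i v.
Proof.
move=> hkp hki.
have h := comm Hrep n k p p i v.
rewrite (Hhw _ _ hkp) Caux0 scaler0 subr0 eqxx scale1r in h.
rewrite (@neq_abs k i hki) (qneg_neq p) (@neq_abs (qneg k) i) // in h.
by rewrite h !scale0r !scaler0 !subr0 addr0.
Qed.

Lemma Caux_low (Hrep : is_qrep rho) (v : V)
  (Hhw : forall x y : qidx N, (qabs x < qabs y)%N -> rho x y v = 0) n (k i : qidx N) :
  (qabs k < qabs i)%N -> Caux rho n k i v = 0.
Proof.
elim: n k => [|n IH] k hk /=; first exact: Hhw.
apply: sum_pair0 => b.
case: (ltnP b.+1 (qabs i)) => hb.
  by rewrite !IH // !rho0 !scaler0 addr0.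
rewrite !(@comm_low Hrep v Hhw n k _ i) //; first last.
- by rewrite neq_ltn hk.
- exact: leq_trans hk hb.
- by rewrite neq_ltn hk.
- exact: leq_trans hk hb.
by rewrite !qsgnE /= scale1r scaleN1r subrr.
Qed.


Lemma rho_high (Hrep : is_qrep rho) (v : V)
  (Hhw : forall x y : qidx N, (qabs x < qabs y)%N -> rho x y v = 0) n (x p : qidx N) :
  qpar x = false -> (qabs x < qabs p)%N ->
  rho x p (Caux rho n p x v) = Caux rho n x x v - qsgn (qpar p) *: Caux rho n p p v.
Proof.
move=> hx hxp.
have h := comm Hrep n x p p x v.
rewrite (Hhw _ _ hxp) Caux0 scaler0 subr0 !eqxx !scale1r in h.
rewrite (qneg_neq p) eq_sym (qneg_neq x) in h.
rewrite h !scale0r !scaler0 subr0 addr0 /ss hx /=.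
by case: (qpar p).
Qed.

Lemma rho_diag (Hrep : is_qrep rho) (v : V) (c : K) n (x : qidx N) :
  rho x x v = c *: v -> rho x x (Caux rho n x x v) = c *: Caux rho n x x v.
Proof.
move=> hv.
have h := comm Hrep n x x x x v.
rewrite hv Caux_scale !eqxx !scale1r (qneg_neq x) eq_sym (qneg_neq x) in h.
move: h; rewrite !scale0r !scaler0 subr0 addr0 /ss.
have -> : (qpar x (+) qpar x) = false by case: (qpar x).
by rewrite /= qsgnE !scale1r subrr => /eqP; rewrite subr_eq0 => /eqP.
Qed.

End Helpers.

Theorem mainTheorem6 (K : numClosedFieldType) (N : nat) (V : lmodType K)
    (rho : qidx N -> qidx N -> {linear V -> V})
    (v : V) (lambda : 'I_N -> K) :
  (0 < N)%N ->
  is_qrep rho ->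
  (forall i j : qidx N, (qabs i < qabs j)%N -> rho i j v = 0) ->
  (forall a : 'I_N, rho (qpos a) (qpos a) v = lambda a *: v) ->
  forall (m : nat) (a : 'I_N), (1 <= m)%N ->
    Cact rho (2 * m).+1 (qpos a) (qpos a) v =
      lambda a *: Cact rho (2 * m) (qpos a) (qpos a) v
      - rho (qneg (qpos a)) (qpos a) (Cact rho (2 * m) (qneg (qpos a)) (qpos a) v).
Proof.
move=> hN Hrep Hhw Hdiag m a hm.
have [n hn] : exists n, (2 * m = n.+1)%N by exists (2 * m).-1; rewrite prednK // muln_gt0.
have on : odd n.
  have : odd (2 * m) = false by rewrite oddM.
  by rewrite hn /= => /negbFE.
rewrite /Cact hn /=.
have R := Hrep.1 (qpos a) (qneg (qpos a)) (Caux rho n (qneg (qpos a)) (qpos a) v).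
rewrite qnegK in R; rewrite R.
have key : \sum_(p : qidx N) (qsgn (qpar p) *: rho (qpos a) p (Caux rho n p (qpos a) v)
   - (p == qpos a)%:R *: (lambda a *: Caux rho n (qpos a) (qpos a) v)
   + (p == qneg (qpos a))%:R *: rho (qpos a) (qneg (qpos a)) (Caux rho n (qneg (qpos a)) (qpos a) v)) = 0.
  apply: sum_pair0 => b.
  have hne : forall c c' : bool, b != a -> ((b, c) == (a, c')) = false.
    by move=> c c' hab; rewrite xpair_eqE (negbTE hab).
  case: (ltngtP b a) => hb.
  - rewrite (@Caux_low _ _ _ _ Hrep v Hhw n (b, false) (qpos a)) //.
    rewrite (@Caux_low _ _ _ _ Hrep v Hhw n (b, true) (qpos a)) //.
    have hba : b != a by apply/eqP => E; move: hb; rewrite E ltnn.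
    rewrite /qpos /qneg /= !hne // !mulr0n.
    by rewrite !raddf0 !(scale0r, addr0, subr0, add0r) oppr0.
  - have E1 : forall c, rho (qpos a) (b, c) (Caux rho n (b, c) (qpos a) v) = Caux rho n (qpos a) (qpos a) v - qsgn c *: Caux rho n (b, c) (b, c) v.
      by move=> c; apply: (@rho_high _ _ _ _ Hrep v Hhw n (qpos a) (b, c)).
    rewrite !E1.

    have hba : b != a by apply/eqP => E; move: hb; rewrite E ltnn.
    rewrite /qpos /qneg /= !hne // !mulr0n.
    rewrite !scale0r !addr0 !subr0.
    have -> : Caux rho n (b, true) (b, true) v = - Caux rho n (b, false) (b, false) v.
      by rewrite -[(b, true)]/(qneg (b, false)) (@Caux_neg _ _ _ _ Hrep) on qsgnE scaleN1r.
    rewrite !qsgnE /= scale1r scaleN1r scaleN1r opprK.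
    by rewrite scale1r subrr.
  - have -> : b = a by apply: val_inj.
    rewrite /qpos /qneg /= !eqxx /=.
    rewrite (@rho_diag _ _ _ _ Hrep v _ _ _ (Hdiag a)) !qsgnE /= !xpair_eqE !eqxx /= !mulr0n !scale0r /qpos subrr add0r subr0 scaleN1r scale1r addNr.
    by rewrite addr0.
move: key; rewrite big_split sumrB /= sum_delta sum_delta.
by move/eqP; rewrite -addrA addr_eq0 => /eqP ->; rewrite opprD opprK.
Qed.
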